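(* Every metrizable locally compact $J$-space has a countable base.
   Context: A topological space $X$ is a $J$-space if whenever $\{A,B\}$ is a cover of $X$ by closed sets with $A\cap B$ compact, then $A$ or $B$ is compact. *)

(* Defs.v *)
From Stdlib Require Import Reals List Classical.
Open Scope R_scope.

Definition set (X : Type) := X -> Prop.

Definition subset {X} (A B : set X) : Prop := forall x, A x -> B x.
Definition bigunion {X} (F : set (set X)) : set X := fun x => exists U, F U /\ U x.

Record topology (X : Type) := Topology {
  open : set X -> Prop;
  open_full : open (fun _ => True);
  open_inter : forall U V, open U -> open V -> open (fun x => U x /\ V x);
  open_union : forall F : set (set X), (forall U, F U -> open U) -> open (bigunion F)
}.
Arguments open {X} t U.

Definition closed {X} (t : topology X) (A : set X) : Prop :=
  open t (fun x => ~ A x).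

Definition compact {X} (t : topology X) (K : set X) : Prop :=
  forall F : set (set X), (forall U, F U -> open t U) -> subset K (bigunion F) ->
  exists l : list (set X), (forall U, In U l -> F U) /\
     subset K (fun x => exists U, In U l /\ U x).

Definition J_space {X} (t : topology X) : Prop :=
  forall A B : set X, closed t A -> closed t B -> (forall x, A x \/ B x) ->
  compact t (fun x => A x /\ B x) -> compact t A \/ compact t B.

Definition locally_compact {X} (t : topology X) : Prop :=
  forall x : X, exists U K, open t U /\ U x /\ subset U K /\ compact t K.

Definition is_metric {X} (d : X -> X -> R) : Prop :=
  (forall x y, 0 <= d x y) /\ (forall x y, d x y = 0 <-> x = y) /\
  (forall x y, d x y = d y x) /\ (forall x y z, d x z <= d x y + d y z).

Definition metrizable {X} (t : topology X) : Prop :=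
  exists d : X -> X -> R, is_metric d /\
    forall U : set X, open t U <->
      (forall x, U x -> exists eps, 0 < eps /\ subset (fun y => d x y < eps) U).

Definition is_base {X} (t : topology X) (B : set (set X)) : Prop :=
  (forall V, B V -> open t V) /\
  (forall U x, open t U -> U x -> exists V, B V /\ V x /\ subset V U).

Definition countable {T} (A : set T) : Prop :=
  exists f : T -> nat, forall a b, A a -> A b -> f a = f b -> a = b.

Definition second_countable {X} (t : topology X) : Prop :=
  exists B : set (set X), is_base t B /\ countable B.

(* Main.v *)
Require Import Defs.
From Stdlib Require Import Reals List Classical.
From Stdlib Require Import Lra ClassicalEpsilon Cantor.
Require Import Defs.
Open Scope R_scope.

Lemma list_choice {A B : Type} (Q : A -> B -> Prop) (l : list A) :
  (forall a, In a l -> exists b, Q a b) ->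
  exists l' : list B, (forall a, In a l -> exists b, In b l' /\ Q a b) /\
                      (forall b, In b l' -> exists a, In a l /\ Q a b).
Proof.
  induction l as [|a l IH]; intros H.
  - exists nil; split; intros ? [].
  - destruct (H a (or_introl eq_refl)) as [b Hb].
    destruct IH as [l' [H1 H2]]; [intros; apply H; now right|].
    exists (b :: l'); split.
    + intros a' [<-|Ha']; [exists b; split; [left|]; auto|].
      destruct (H1 a' Ha') as [b' [? ?]]; exists b'; split; [right|]; auto.
    + intros b' [<-|Hb']; [exists a; split; [left|]; auto|].
      destruct (H2 b' Hb') as [a' [? ?]]; exists a'; split; [right|]; auto.
Qed.

Section Comp.
Context {X : Type} (t : topology X).

Lemma compact_ext (A B : set X) : (forall z, A z <-> B z) -> compact t A -> compact t B.
Proof.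
  intros E HA F HF HB. destruct (HA F HF) as [l [H1 H2]].
  - intros z Hz; apply HB, E, Hz.
  - exists l; split; auto. intros z Hz; apply H2, E, Hz.
Qed.

Lemma compact_empty : compact t (fun _ => False).
Proof. intros F _ _; exists nil; split; [intros ? []| intros ? []]. Qed.

Lemma compact_single (x : X) : compact t (fun y => y = x).
Proof.
  intros F HF HC. destruct (HC x eq_refl) as [U [HU Ux]].
  exists (U :: nil); split.
  - intros V [<-|[]]; auto.
  - intros z ->; exists U; split; [left|]; auto.
Qed.

Lemma compact_union2 (A B : set X) : compact t A -> compact t B ->
  compact t (fun z => A z \/ B z).
Proof.
  intros HA HB F HF HC.
  destruct (HA F HF) as [l1 [H11 H12]]; [intros z Hz; apply HC; auto|].
  destruct (HB F HF) as [l2 [H21 H22]]; [intros z Hz; apply HC; auto|].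
  exists (l1 ++ l2); split.
  - intros U HU; apply in_app_iff in HU as [?|?]; auto.
  - intros z [Hz|Hz]; [destruct (H12 z Hz) as [U [? ?]]|destruct (H22 z Hz) as [U [? ?]]];
      exists U; split; auto; apply in_app_iff; auto.
Qed.

Lemma compact_listunion (l : list (set X)) : (forall L, In L l -> compact t L) ->
  compact t (fun z => exists L, In L l /\ L z).
Proof.
  induction l as [|L l IH]; intros H.
  - eapply compact_ext; [|apply compact_empty]. intros z; split; [intros []|intros [? [[] _]]].
  - eapply compact_ext; [|apply compact_union2; [apply (H L (or_introl eq_refl))|apply IH; intros; apply H; now right]].
    intros z; split.
    + intros [Hz|[L' [? ?]]]; [exists L; split; [left|]; auto| exists L'; split; [right|]; auto].
    + intros [L' [[<-|?] ?]]; [left; auto| right; exists L'; auto].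
Qed.

Lemma compact_increasing (K : set X) (V : nat -> set X) :
  compact t K -> (forall n, open t (V n)) -> (forall n z, V n z -> V (S n) z) ->
  subset K (fun z => exists n, V n z) -> exists N, subset K (V N).
Proof.
  intros HK HV Hm HC.
  assert (Hle : forall n m, (n <= m)%nat -> forall z, V n z -> V m z).
  { intros n m Hnm; induction Hnm; auto. }
  destruct (HK (fun U => exists n, U = V n)) as [l [H1 H2]].
  - intros U [n ->]; auto.
  - intros z Hz; destruct (HC z Hz) as [n Hn]; exists (V n); split; eauto.
  - assert (HN : exists N, forall U, In U l -> forall z, U z -> V N z).
    { clear H2. induction l as [|U l IH].
      - exists 0%nat; intros ? [].
      - destruct IH as [N HN]; [intros; apply H1; now right|].
        destruct (H1 U (or_introl eq_refl)) as [n ->].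
        exists (Nat.max n N); intros U' [<-|HU'] z Hz.
        + eapply Hle; [apply Nat.le_max_l|auto].
        + eapply Hle; [apply Nat.le_max_r|eauto]. }
    destruct HN as [N HN]; exists N; intros z Hz.
    destruct (H2 z Hz) as [U [? ?]]; eauto.
Qed.

End Comp.

Section Metric.
Context {X : Type} (t : topology X) (d : X -> X -> R).
Hypothesis Hd : is_metric d.
Hypothesis Hopen : forall U : set X, open t U <->
      (forall x, U x -> exists eps, 0 < eps /\ subset (fun y => d x y < eps) U).
Hypothesis HLC : locally_compact t.

Definition mball (x : X) (r : R) : set X := fun y => d x y < r.

Lemma d_nn x y : 0 <= d x y. Proof. apply Hd. Qed.
Lemma d_xx x : d x x = 0. Proof. apply Hd; auto. Qed.
Lemma d_sym x y : d x y = d y x. Proof. apply Hd. Qed.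
Lemma d_tri x y z : d x z <= d x y + d y z. Proof. apply Hd. Qed.

Lemma mball_open x r : open t (mball x r).
Proof.
  apply Hopen; intros y Hy; exists (r - d x y); split; unfold mball in *; [lra|].
  intros z Hz; pose proof (d_tri x y z); lra.
Qed.

Definition G (x : X) (r : R) : Prop :=
  0 < r <= 1 /\ exists L, compact t L /\ subset (mball x r) L.

Lemma G_ne x : exists r, G x r.
Proof.
  destruct (HLC x) as [U [K [HU [Ux [HUK HK]]]]].
  destruct (proj1 (Hopen U) HU x Ux) as [e [He Hsub]].
  exists (Rmin e 1); split; [split; [apply Rmin_glb_lt; lra|apply Rmin_r]|].
  exists K; split; auto. intros z Hz; apply HUK, Hsub. unfold mball in Hz.
  pose proof (Rmin_l e 1); lra.
Qed.

Lemma G_bound x : bound (G x).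
Proof. exists 1; intros r [[_ H] _]; auto. Qed.

Definition rho (x : X) : R := proj1_sig (completeness (G x) (G_bound x) (G_ne x)).

Lemma rho_lub x : is_lub (G x) (rho x).
Proof. unfold rho; destruct completeness; auto. Qed.

Lemma rho_pos x : 0 < rho x.
Proof.
  destruct (G_ne x) as [r Hr]. pose proof (proj1 (rho_lub x) r Hr). destruct Hr as [[? ?] _]; lra.
Qed.

Lemma rho_le1 x : rho x <= 1.
Proof. apply (proj2 (rho_lub x)); intros r [[_ H] _]; auto. Qed.

Lemma rho_ball x r : 0 < r -> r < rho x -> exists L, compact t L /\ subset (mball x r) L.
Proof.
  intros Hr Hrx.
  destruct (classic (exists r', G x r' /\ r < r')) as [[r' [[_ [L [HL Hs]]] Hlt]]|Hn].
  - exists L; split; auto. intros z Hz; apply Hs; unfold mball in *; lra.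
  - assert (rho x <= r); [|lra].
    apply (proj2 (rho_lub x)); intros r' Hr'.
    destruct (Rle_or_lt r' r); auto. exfalso; apply Hn; eauto.
Qed.

Lemma rho_lip x y : rho x - d x y <= rho y.
Proof.
  destruct (Rle_or_lt (rho x - d x y) (rho y)) as [|Hlt]; auto. exfalso.
  set (r := (rho y + (rho x - d x y)) / 2).
  pose proof (rho_pos y); pose proof (rho_le1 x); pose proof (d_nn x y).
  destruct (rho_ball x (r + d x y)) as [L [HL Hs]]; unfold r; try lra.
  assert (G y r).
  { split; [unfold r; lra|]. exists L; split; auto.
    intros z Hz; apply Hs; unfold mball in *; pose proof (d_tri x y z); lra. }
  pose proof (proj1 (rho_lub y) r H2). unfold r in H3; lra.
Qed.

Definition step (p q : X) : Prop := d p q < rho p / 2 /\ d p q < rho q / 2.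

Lemma step_ball y z : d y z < rho y / 4 -> step y z.
Proof.
  intros H. pose proof (rho_lip y z); pose proof (rho_pos y); pose proof (d_nn y z).
  split; lra.
Qed.

Lemma step_ball' y z : d y z < rho z / 4 -> step y z.
Proof.
  intros H. rewrite d_sym in H. destruct (step_ball z y H). split; rewrite d_sym; auto.
Qed.

Fixpoint reach (x : X) (n : nat) : set X :=
  match n with
  | O => fun y => y = x
  | S n => fun q => exists p, reach x n p /\ (p = q \/ step p q)
  end.

Definition Rch (x : X) : set X := fun q => exists n, reach x n q.

Lemma Rch_step x p q : Rch x p -> step p q -> Rch x q.
Proof. intros [n Hn] Hs; exists (S n); simpl; eauto. Qed.

Lemma grow (K : set X) : compact t K -> exists K', compact t K' /\
   forall p q, K p -> (p = q \/ step p q) -> K' q.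
Proof.
  intros HK.
  destruct (HK (fun U => exists y, K y /\ U = mball y (rho y / 4))) as [l [H1 H2]].
  - intros U [y [_ ->]]; apply mball_open.
  - intros z Hz; exists (mball z (rho z / 4)); split; eauto.
    unfold mball; rewrite d_xx; pose proof (rho_pos z); lra.
  - destruct (list_choice (fun U L => compact t L /\ exists y, U = mball y (rho y / 4) /\
                 subset (mball y (7 * rho y / 8)) L) l) as [l' [H3 H4]].
    { intros U HU. destruct (H1 U HU) as [y [_ ->]].
      destruct (rho_ball y (7 * rho y / 8)) as [L [HL Hs]]; try (pose proof (rho_pos y); lra).
      exists L; split; eauto. }
    exists (fun z => K z \/ exists L, In L l' /\ L z); split.
    + apply compact_union2; auto. apply compact_listunion.
      intros L HL; destruct (H4 L HL) as [U [_ [? _]]]; auto.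
    + intros p q Kp [<-|Hst]; [now left|right].
      destruct (H2 p Kp) as [U [HU Up]]. destruct (H3 U HU) as [L [HL [_ [y [-> Hs]]]]].
      exists L; split; auto. apply Hs. unfold mball in *.
      pose proof (rho_lip p y). destruct Hst as [Hst _]. rewrite (d_sym p y) in H.
      pose proof (d_tri y p q). lra.
Qed.

Definition sigma (S : set X) : Prop := exists K : nat -> set X,
  (forall n, compact t (K n)) /\ forall x, S x -> exists n, K n x.

Lemma sigma_Rch x : sigma (Rch x).
Proof.
  assert (H : forall n, exists K, compact t K /\ subset (reach x n) K).
  { induction n as [|n [K [HK Hs]]].
    - exists (fun y => y = x); split; [apply compact_single|intros z Hz; auto].
    - destruct (grow K HK) as [K' [HK' Hg]]. exists K'; split; auto.
      intros q [p [Hp Hpq]]; eapply Hg; eauto. }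
  exists (fun n => proj1_sig (constructive_indefinite_description _ (H n))); split.
  - intros n; destruct constructive_indefinite_description as [K [? ?]]; auto.
  - intros z [n Hn]; exists n; destruct constructive_indefinite_description as [K [? ?]]; simpl; auto.
Qed.

Lemma sigma_countable (S : nat -> set X) : (forall n, sigma (S n)) ->
  sigma (fun x => exists n, S n x).
Proof.
  intros H.
  set (K := fun n => proj1_sig (constructive_indefinite_description _ (H n))).
  assert (HK : forall n, (forall m, compact t (K n m)) /\ forall x, S n x -> exists m, K n m x).
  { intros n; unfold K; destruct constructive_indefinite_description; auto. }
  exists (fun k => K (fst (of_nat k)) (snd (of_nat k))); split.
  - intros k; apply HK.
  - intros x [n Hn]; destruct (proj2 (HK n) x Hn) as [m Hm].
    exists (to_nat (n, m)); rewrite cancel_of_to; auto.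
Qed.

Lemma sigma_union2 (A B : set X) : sigma A -> sigma B -> sigma (fun x => A x \/ B x).
Proof.
  intros HA HB.
  destruct (sigma_countable (fun n => match n with O => A | _ => B end)) as [K [HK Hc]].
  { intros [|n]; auto. }
  exists K; split; auto. intros x [Hx|Hx]; apply Hc; [exists O|exists 1%nat]; auto.
Qed.


Fixpoint W (x0 : X) (pk : set X -> X) (n : nat) : set X :=
  match n with
  | O => Rch x0
  | S n => fun y => W x0 pk n y \/ Rch (pk (W x0 pk n)) y
  end.

Lemma W_step x0 pk n p q : W x0 pk n p -> step p q -> W x0 pk n q.
Proof.
  induction n; simpl; intros Hp Hs.
  - eapply Rch_step; eauto.
  - destruct Hp as [Hp|Hp]; [left; auto|right; eapply Rch_step; eauto].
Qed.

Lemma W_sigma x0 pk n : sigma (W x0 pk n).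
Proof.
  induction n; simpl; [apply sigma_Rch|apply sigma_union2; auto; apply sigma_Rch].
Qed.

Hypothesis HJ : J_space t.

Lemma sigma_full : sigma (fun _ => True).
Proof.
  apply NNPP; intros NS.
  destruct (classic (exists x : X, True)) as [[x0 _]|Hne].
  2:{ apply NS; exists (fun _ => fun _ => False); split; [intros; apply compact_empty|].
      intros x; exfalso; apply Hne; eauto. }
  set (pk := fun S : set X => epsilon (inhabits x0) (fun x => ~ S x)).
  set (V := W x0 pk).
  assert (Hpk : forall n, ~ V n (pk (V n))).
  { intros n. apply (epsilon_spec (inhabits x0) (fun x => ~ V n x)).
    apply NNPP; intros Hn. apply NS. destruct (W_sigma x0 pk n) as [K [HK Hc]].
    exists K; split; auto. intros x _; apply Hc. apply NNPP; intros Hx; apply Hn; eauto. }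
  assert (Vopen : forall n, open t (V n)).
  { intros n; apply Hopen; intros y Hy; exists (rho y / 4); split; [pose proof (rho_pos y); lra|].
    intros z Hz; eapply W_step; eauto; apply step_ball; auto. }
  set (A := fun y => exists n, V n y).
  assert (Aopen : forall y, A y -> exists eps, 0 < eps /\ subset (fun z => d y z < eps) A).
  { intros y [n Hy]; exists (rho y / 4); split; [pose proof (rho_pos y); lra|].
    intros z Hz; exists n; eapply W_step; eauto; apply step_ball; auto. }
  destruct (HJ A (fun y => ~ A y)) as [HA|HB].
  - apply Hopen. intros z Hz; exists (rho z / 4); split; [pose proof (rho_pos z); lra|].
    intros y Hy [n Hn]; apply Hz; exists n; eapply W_step; [exact Hn|].
    apply step_ball'; rewrite d_sym; auto.
  - apply Hopen. intros z Hz. apply NNPP in Hz. destruct (Aopen z Hz) as [e [He Hs]].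
    exists e; split; auto. intros y Hy Hn; apply Hn, Hs, Hy.
  - intros x; apply classic.
  - eapply compact_ext; [|apply compact_empty]; intros z; split; [intros []|intros [? ?]; auto].
  - destruct (compact_increasing t A V HA Vopen) as [N HN].
    + intros n z Hz; simpl; left; auto.
    + intros z Hz; auto.
    + apply (Hpk N), HN. exists (S N); simpl; right. exists O; simpl; auto.
  - apply NS.
    destruct (sigma_union2 A (fun y => ~ A y)) as [K [HK Hc]].
    + apply sigma_countable; intros n; apply W_sigma.
    + exists (fun _ => fun y => ~ A y); split; [intros; auto|intros x Hx; exists O; auto].
    + exists K; split; auto. intros x _; apply Hc, classic.
Qed.

End Metric.

Section Base.
Context {X : Type} (t : topology X) (d : X -> X -> R).
Hypothesis Hd : is_metric d.
Hypothesis Hopen : forall U : set X, open t U <->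
      (forall x, U x -> exists eps, 0 < eps /\ subset (fun y => d x y < eps) U).

Lemma net (K : set X) e : compact t K -> 0 < e ->
  exists l : list X, forall x, K x -> exists y, In y l /\ d y x < e.
Proof.
  intros HK He.
  destruct (HK (fun U => exists y, U = mball d y e)) as [l [H1 H2]].
  - intros U [y ->]; apply (mball_open t d Hd Hopen).
  - intros z _; exists (mball d z e); split; eauto. unfold mball; rewrite (d_xx d Hd); auto.
  - destruct (list_choice (fun U y => U = mball d y e) l) as [l' [H3 _]]; [intros; apply H1; auto|].
    exists l'; intros x Kx. destruct (H2 x Kx) as [U [HU Ux]].
    destruct (H3 U HU) as [y [? ->]]; eauto.
Qed.

Hypothesis Hs : sigma t (fun _ => True).

Lemma base_exists : second_countable t.
Proof.
  destruct Hs as [K [HK Hc]].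
  assert (Hn : forall j k, exists l : list X, forall x, K j x ->
      exists y, In y l /\ d y x < / (INR k + 1)).
  { intros j k; apply net; auto. apply Rinv_0_lt_compat. pose proof (pos_INR k); lra. }
  set (ys := fun j k => proj1_sig (constructive_indefinite_description _ (Hn j k))).
  assert (Hys : forall j k x, K j x -> exists y, In y (ys j k) /\ d y x < / (INR k + 1)).
  { intros j k; unfold ys; destruct constructive_indefinite_description; auto. }
  set (P := fun (V : set X) (p : nat * nat * nat) => exists y,
        nth_error (ys (fst (fst p)) (snd (fst p))) (snd p) = Some y /\
        V = mball d y (/ (INR (snd (fst p)) + 1))).
  exists (fun V => exists p, P V p). split; [split|].
  - intros V [p [y [_ ->]]]; apply (mball_open t d Hd Hopen).
  - intros U x HU Ux.
    destruct (proj1 (Hopen U) HU x Ux) as [e [He Hsub]].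
    destruct (INR_unbounded (2 / e)) as [k Hk].
    destruct (Hc x I) as [j Hj].
    destruct (Hys j k x Hj) as [y [Hy Hyx]].
    destruct (In_nth_error _ _ Hy) as [i Hi].
    exists (mball d y (/ (INR k + 1))); split; [|split].
    + exists (j, k, i); exists y; split; auto.
    + exact Hyx.
    + intros z Hz; apply Hsub. unfold mball in Hz.
      assert (Hdl : 2 * / (INR k + 1) < e).
      { pose proof (pos_INR k).
        apply (Rmult_lt_reg_r (INR k + 1)); [lra|].
        rewrite Rmult_assoc, Rinv_l by lra.
        apply (Rmult_lt_reg_l (/ e)); [apply Rinv_0_lt_compat; lra|].
        replace (/ e * (2 * 1)) with (2 / e) by (unfold Rdiv; ring).
        replace (/ e * (e * (INR k + 1))) with (INR k + 1) by (field; lra). lra. }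
      pose proof (d_tri d Hd x y z). rewrite (d_sym d Hd x y) in H. lra.
  - exists (fun V => to_nat (to_nat (fst (fst (epsilon (inhabits (0,0,0)%nat) (P V))),
                                      snd (fst (epsilon (inhabits (0,0,0)%nat) (P V)))),
                             snd (epsilon (inhabits (0,0,0)%nat) (P V)))).
    intros V V' HV HV' Heq.
    pose proof (epsilon_spec (inhabits (0,0,0)%nat) (P V) HV) as E1.
    pose proof (epsilon_spec (inhabits (0,0,0)%nat) (P V') HV') as E2.
    assert (Hinj : forall p q : nat * nat, to_nat p = to_nat q -> p = q).
    { intros p q Hpq. rewrite <- (cancel_of_to p), <- (cancel_of_to q), Hpq; auto. }
    apply Hinj in Heq. pose proof (f_equal snd Heq) as Hc3. apply (f_equal fst) in Heq. cbn [fst snd] in Heq, Hc3. apply Hinj in Heq. pose proof (f_equal snd Heq) as Hb. apply (f_equal fst) in Heq as Ha. cbn [fst snd] in Ha, Hb.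
    revert E1 E2 Ha Hb Hc3.
    destruct (epsilon (inhabits (0,0,0)%nat) (P V)) as [[a b] c].
    destruct (epsilon (inhabits (0,0,0)%nat) (P V')) as [[a' b'] c'].
    simpl; intros E1 E2 -> -> ->.
    destruct E1 as [y [Hy ->]]; destruct E2 as [y' [Hy' ->]]; simpl in *.
    rewrite Hy in Hy'; injection Hy' as ->; auto.
Qed.

End Base.

Theorem proposition1p3 (X : Type) (t : topology X) :
  metrizable t -> locally_compact t -> J_space t -> second_countable t.
Proof.
  intros [d [Hd Hopen]] HLC HJ.
  apply (base_exists t d Hd Hopen).
  apply (sigma_full t d Hd Hopen HLC HJ).
Qed.
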